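(* In the non-binary voting game, let $e(N)$ be any function of $N$. For every $N$ large enough that the number of friendly agents is less than $\mu N$ and the number of unfriendly agents is less than $(1-\mu)N$, and every regular strategy profile $\Sigma^*$ with $N$ agents satisfying $A(\Sigma^* )\ge1-e(N)$, the profile $\Sigma^*$ is an $\varepsilon$-strong Bayes Nash Equilibrium with $\varepsilon=\mathcal{W}B((\mathcal{W}-1)B+1)\,e(N)$.
   Context: Non-binary voting game. $N$ agents each vote for $\mathbf{A}$ or $\mathbf{R}$. World state $W\in\{1,\dots,\mathcal{W}\}$ (unobserved), prior $P_w>0$. Conditional on $W$, each agent independently receives a signal $S_n\in\{1,\dots,M\}$ with $P_{mw}=\Pr[S_n=m\mid W=w]$, satisfying stochastic dominance ($\Pr[S_n\ge m\mid w_1]>\Pr[S_n\ge m\mid w_2]$ for $w_1>w_2$, $m\ge2$). Threshold $\mu\in(0,1)$: $\mathbf{A}$ wins iff at least $\mu N$ agents vote $\mathbf{A}$, else $\mathbf{R}$. Agent $n$ has utility $v_n:\{1,\dots,\mathcal{W}\}\times\{\mathbf{A},\mathbf{R}\}\to\{0,\dots,B\}$ ($B$ a positive integer) with $v_n(w,\mathbf{A})$ strictly increasing, $v_n(w,\mathbf{R})$ strictly decreasing in $w$, and $v_n(w,\mathbf{A})\ne v_n(w,\mathbf{R})$. Constants $\alpha^{\mathbf{A}}_w,\alpha^{\mathbf{R}}_w=1-\alpha^{\mathbf{A}}_w$: exactly $\lfloor\alpha^{\mathbf{R}}_wN\rfloor$ agents prefer $\mathbf{R}$ in state $w$; $\alpha^{\mathbf{A}}_w\ne\mu$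 and rounding does not flip the comparison with $\mu$. Informed majority decision in $w$: $\mathbf{A}$ if $\alpha^{\mathbf{A}}_w>\mu$, else $\mathbf{R}$. $\mathcal{L}=\{w:\alpha^{\mathbf{A}}_w<\mu\}$, $\mathcal{H}=\{w:\alpha^{\mathbf{A}}_w>\mu\}$, both nonempty. For agent $n$, $\mathcal{L}_n=\{w:v_n(w,\mathbf{R})>v_n(w,\mathbf{A})\}$, $\mathcal{H}_n=\{w:v_n(w,\mathbf{A})>v_n(w,\mathbf{R})\}$; friendly if $\mathcal{L}\cap\mathcal{H}_n\ne\emptyset$, unfriendly if $\mathcal{H}\cap\mathcal{L}_n\ne\emptyset$, contingent if $\mathcal{L}_n=\mathcal{L}$. Strategy $\sigma=(\beta_1,\dots,\beta_M)$, $\beta_m$ = probability of voting $\mathbf{A}$ on signal $m$. Regular profile: friendly agents always vote $\mathbf{A}$, unfriendly always vote $\mathbf{R}$. $\lambda^{\mathbf{X}}_w(\Sigma)$: ex-ante probability that $\mathbf{X}$ wins in state $w$. Fidelity $A(\Sigma)=\sum_{w\in\mathcal{L}}P_w\lambda^{\mathbf{R}}_w(\Sigma)+\sum_{w\in\mathcal{H}}P_w\lambda^{\mathbf{A}}_w(\Sigma)$. Expected utility $u_n(\Sigma)=\sum_wP_w(\lambda^{\mathbf{A}}_w(\Sigma)v_n(w,\mathbf{A})+\lambda^{\mathbf{R}}_w(\Sigma)v_n(w,\mathbf{R}))$. $\Sigma$ is an $\varepsilon$-strong Bayes Nash Equilibrium if there is no set $D$ of agents and profile $\Sigma'$ with $\sigma'_n=\sigma_n$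 for $n\notin D$, $u_n(\Sigma')\ge u_n(\Sigma)$ for all $n\in D$ and $u_n(\Sigma')>u_n(\Sigma)+\varepsilon$ for some $n\in D$. *)

(* Defs.v *)
From HB Require Import structures.
From mathcomp Require Import all_boot all_order all_algebra.
Set Implicit Arguments. Unset Strict Implicit. Unset Printing Implicit Defensive.
Import Order.TTheory GRing.Theory Num.Theory.
Local Open Scope ring_scope.

(* Conventions: world states are 'I_W (state w+1 of the paper is ordinal w),
   signals are 'I_M (signal m+1 of the paper is ordinal m), agents are 'I_N.
   Outcomes: true = A, false = R.
   A strategy profile is beta : 'I_N -> 'I_M -> R, beta n m = probability that
   agent n votes A upon signal m. *)

Section Game.
Variables (R : archiRealFieldType) (W M N : nat).
Variables (Pw : 'I_W -> R) (P : 'I_M -> 'I_W -> R) (mu : R).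
Variables (v : 'I_N -> 'I_W -> bool -> nat) (alpha : 'I_W -> R).

Definition is_profile (beta : 'I_N -> 'I_M -> R) :=
  forall n m, 0 <= beta n m <= 1.

Definition lam (x : bool) (beta : 'I_N -> 'I_M -> R) (w : 'I_W) : R :=
  \sum_(s : {ffun 'I_N -> 'I_M}) \sum_(a : {ffun 'I_N -> bool})
    (\prod_(n < N) (P (s n) w *
        (if a n then beta n (s n) else 1 - beta n (s n))))
    * (if (mu * N%:R <= #|[set n | a n]|%:R) == x then 1 else 0).

Definition inL (w : 'I_W) := alpha w < mu.
Definition inH (w : 'I_W) := mu < alpha w.

Definition fidelity (beta : 'I_N -> 'I_M -> R) : R :=
  \sum_(w | inL w) Pw w * lam false beta w + \sum_(w | inH w) Pw w * lam true beta w.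

Definition utility (beta : 'I_N -> 'I_M -> R) (n : 'I_N) : R :=
  \sum_w Pw w * (lam true beta w * (v n w true)%:R
                 + lam false beta w * (v n w false)%:R).

Definition friendly (n : 'I_N) : bool :=
  [exists w, inL w && (v n w false < v n w true)%N].
Definition unfriendly (n : 'I_N) : bool :=
  [exists w, inH w && (v n w true < v n w false)%N].

Definition regular (beta : 'I_N -> 'I_M -> R) :=
  (forall n m, friendly n -> beta n m = 1) /\
  (forall n m, unfriendly n -> beta n m = 0).

Definition eps_strong_BNE (eps : R) (beta : 'I_N -> 'I_M -> R) :=
  ~ exists (D : {set 'I_N}) (beta' : 'I_N -> 'I_M -> R),
      [/\ is_profile beta',
          (forall n, n \notin D -> beta' n = beta n),
          (forall n, n \in D -> utility beta n <= utility beta' n) &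
          (exists2 n, n \in D & utility beta n + eps < utility beta' n)].
End Game.

(* Main.v *)
Require Import Defs.
From HB Require Import structures.
From mathcomp Require Import all_boot all_order all_algebra.
From mathcomp Require Import ring lra.
Import Order.TTheory GRing.Theory Num.Theory.
Local Open Scope ring_scope.

Section Prob.
Variables (R : archiRealFieldType) (W M N : nat).
Variables (P : 'I_M -> 'I_W -> R) (mu : R).

Definition qv (p : R) (b : bool) : R := if b then p else 1 - p.
Definition Uv (a : {ffun 'I_N -> bool}) : R :=
  if (mu * N%:R <= #|[set n | a n]|%:R) == true then 1 else 0.
Definition inner (pv : 'I_N -> R) : R :=
  \sum_(a : {ffun 'I_N -> bool}) (\prod_(n < N) qv (pv n) (a n)) * Uv a.

Lemma lam_inner (beta : 'I_N -> 'I_M -> R) w :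
  lam P mu true beta w =
  \sum_(s : {ffun 'I_N -> 'I_M}) (\prod_(n < N) P (s n) w) *
      inner (fun n => beta n (s n)).
Proof.
rewrite /lam; apply: eq_bigr => s _.
rewrite /inner mulr_sumr; apply: eq_bigr => a _.
by rewrite big_split /= mulrA.
Qed.

Lemma lam_sum1 (beta : 'I_N -> 'I_M -> R) w :
  (\sum_m P m w = 1) ->
  lam P mu true beta w + lam P mu false beta w = 1.
Proof.
move=> HP; rewrite /lam -big_split /=.
transitivity (\sum_(s : {ffun 'I_N -> 'I_M}) \prod_(n < N) P (s n) w).
  apply: eq_bigr => s _; rewrite -big_split /=.
  transitivity (\sum_(a : {ffun 'I_N -> bool}) \prod_(n < N)
      (P (s n) w * (if a n then beta n (s n) else 1 - beta n (s n)))).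
    apply: eq_bigr => a _; rewrite -mulrDr.
    by case: (_ <= _); rewrite /= ?addr0 ?add0r mulr1.
  rewrite -(bigA_distr_bigA (fun n (b : bool) =>
      P (s n) w * (if b then beta n (s n) else 1 - beta n (s n)))) /=.
  apply: eq_bigr => n _.
  rewrite big_bool /= -mulrDr.
  by rewrite addrC subrK mulr1.
rewrite -(bigA_distr_bigA (fun (n : 'I_N) (m : 'I_M) => P m w)) /=.
by rewrite big1 // => n _; rewrite HP.
Qed.

Lemma lam_ge0 x (beta : 'I_N -> 'I_M -> R) w :
  (forall m w, 0 <= P m w) -> is_profile beta -> 0 <= lam P mu x beta w.
Proof.
move=> HP Hb; rewrite /lam; apply: sumr_ge0 => s _; apply: sumr_ge0 => a _.
apply: mulr_ge0; last by case: (_ == _).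
apply: prodr_ge0 => n _; apply: mulr_ge0 => //.
by have /andP[h1 h2] := Hb n (s n); case: (a n); rewrite // subr_ge0.
Qed.


Definition flip (j : 'I_N) (a : {ffun 'I_N -> bool}) : {ffun 'I_N -> bool} :=
  [ffun n => if n == j then ~~ a n else a n].

Lemma flipK j : involutive (flip j).
Proof.
move=> a; apply/ffunP => n; rewrite !ffunE.
by case: eqP => _ //; rewrite negbK.
Qed.

Lemma Uv_mono (a a' : {ffun 'I_N -> bool}) :
  (forall n, a n -> a' n) -> Uv a <= Uv a'.
Proof.
move=> H; rewrite /Uv.
have Hc : (#|[set n | a n]| <= #|[set n | a' n]|)%N.
  by apply: subset_leq_card; apply/subsetP => n; rewrite !inE; apply: H.
case: ifP => h1; case: ifP => h2 //.
move: h1 h2; rewrite !eqb_id => h1 /negbT; rewrite -ltNge => h2.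
have : (#|[set n | a' n]|%:R : R) < #|[set n | a n]|%:R.
  by apply: lt_le_trans h2 h1.
by rewrite ltr_nat ltnNge Hc.
Qed.

Lemma inner_ext (p1 p2 : 'I_N -> R) : p1 =1 p2 -> inner p1 = inner p2.
Proof.
move=> H; rewrite /inner; apply: eq_bigr => a _; congr (_ * _).
by apply: eq_bigr => n _; rewrite H.
Qed.

Lemma inner_split (pv : 'I_N -> R) j :
  inner pv = \sum_(a : {ffun 'I_N -> bool} | a j)
    ((\prod_(n | n != j) qv (pv n) (a n)) *
       (pv j * Uv a + (1 - pv j) * Uv (flip j a))).
Proof.
rewrite /inner (bigID (fun a : {ffun 'I_N -> bool} => a j)) /=.
rewrite [X in _ + X](reindex_inj (inv_inj (flipK j))) /=.
rewrite [X in _ + X](eq_bigl (fun a : {ffun 'I_N -> bool} => a j)); last first.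
  by move=> a; rewrite ffunE eqxx negbK.
rewrite -big_split /=; apply: eq_bigr => a Ha.
rewrite (bigD1 j) //= (bigD1 j (P := predT)) //= !ffunE eqxx Ha /qv /=.
have -> : \prod_(i < N | i != j) (if flip j a i then pv i else 1 - pv i)
        = \prod_(i < N | i != j) (if a i then pv i else 1 - pv i).
  by apply: eq_bigr => i Hi; rewrite ffunE (negbTE Hi).
ring.
Qed.

Lemma inner_mono1 (p1 p2 : 'I_N -> R) j :
  (forall n, 0 <= p1 n <= 1) ->
  (forall n, n != j -> p1 n = p2 n) -> p1 j <= p2 j ->
  inner p1 <= inner p2.
Proof.
move=> H01 Heq Hj; rewrite (inner_split p1 j) (inner_split p2 j).
apply: ler_sum => a Ha.
have -> : \prod_(n | n != j) qv (p2 n) (a n) = \prod_(n | n != j) qv (p1 n) (a n).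
  by apply: eq_bigr => n Hn; rewrite Heq.
set C := \prod_(n | n != j) _.
have HC : 0 <= C.
  apply: prodr_ge0 => n _; have /andP[h1 h2] := H01 n.
  by rewrite /qv; case: (a n); rewrite // subr_ge0.
have HU : Uv (flip j a) <= Uv a.
  by apply: Uv_mono => n; rewrite ffunE; case: eqP => [->|]; rewrite ?Ha.
have H1 : 0 <= (p2 j - p1 j) * (Uv a - Uv (flip j a)).
  by apply: mulr_ge0; rewrite subr_ge0.
have H2 := mulr_ge0 HC H1.
rewrite -subr_ge0; move: H2.
suff -> : C * (p2 j * Uv a + (1 - p2 j) * Uv (flip j a)) -
  C * (p1 j * Uv a + (1 - p1 j) * Uv (flip j a)) =
  C * ((p2 j - p1 j) * (Uv a - Uv (flip j a))) by [].
ring.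
Qed.

Lemma inner_mono (p1 p2 : 'I_N -> R) :
  (forall n, 0 <= p1 n <= 1) -> (forall n, 0 <= p2 n <= 1) ->
  (forall n, p1 n <= p2 n) -> inner p1 <= inner p2.
Proof.
move=> H1 H2 H12.
pose mid k := fun n : 'I_N => if (n < k)%N then p2 n else p1 n.
have Hmid : forall k, (k <= N)%N -> inner p1 <= inner (mid k).
  elim=> [|k IH] Hk.
    have -> : inner (mid 0%N) = inner p1 by apply: inner_ext => n; rewrite /mid ltn0.
    exact: lexx.
  apply: le_trans (IH (ltnW Hk)) _.
  apply: (@inner_mono1 (mid k) (mid k.+1) (Ordinal Hk)).
  - move=> n; rewrite /mid; case: ifP => _; [exact: H2|exact: H1].
  - move=> n Hn; rewrite /mid.
    have Hnk : (val n == k) = false.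
      by apply/negbTE; apply: contra Hn => /eqP h; apply/eqP/val_inj.
    have -> : (n < k.+1)%N = (n < k)%N by rewrite ltnS leq_eqVlt Hnk.
    by [].
  - by rewrite /mid /= ltnn ltnSn.
have -> : inner p2 = inner (mid N) by apply: inner_ext => n; rewrite /mid ltn_ord.
exact: Hmid.
Qed.

Lemma lam_mono (b1 b2 : 'I_N -> 'I_M -> R) w :
  (forall m w, 0 <= P m w) -> is_profile b1 -> is_profile b2 ->
  (forall n m, b1 n m <= b2 n m) ->
  lam P mu true b1 w <= lam P mu true b2 w.
Proof.
move=> HP Hb1 Hb2 H12; rewrite !lam_inner; apply: ler_sum => s _.
apply: ler_wpM2l; first by apply: prodr_ge0.
by apply: inner_mono.
Qed.

End Prob.

Set Implicit Arguments. Unset Strict Implicit.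
Section Arith.
Variable R : realFieldType.
Implicit Types X Y b ee g p q : R.

Lemma ar_gen X Y b ee g p (p' : R) :
  0 <= X -> 0 <= Y -> 1 <= b -> 0 <= ee -> X <= b * ee -> Y <= b * ee ->
  - b <= p <= b -> - b <= p' <= b -> g <= X * p - Y * p' + b * ee ->
  g <= 2 * b * (b + 1) * ee.
Proof.
move=> hX hY hb he hXb hYb /andP[h1 h2] /andP[h3 h4] hg.
have h5 : X * p <= X * b by apply: ler_wpM2l.
have h6 : - (Y * p') <= Y * b by rewrite -mulrN; apply: ler_wpM2l => //; lra.
have h7 : X * b <= b * ee * b by apply: ler_wpM2r => //; lra.
have h8 : Y * b <= b * ee * b by apply: ler_wpM2r => //; lra.
have h9 : 0 <= b * ee by apply: mulr_ge0 => //; lra.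
have -> : 2 * b * (b + 1) * ee = 2 * (b * ee * b) + 2 * (b * ee) by ring.
lra.
Qed.

Lemma ar_cont X Y b ee p (p' : R) :
  0 <= X -> 0 <= Y -> p <= -1 -> 1 <= p' -> 0 <= X * p - Y * p' + b * ee ->
  X <= b * ee /\ Y <= b * ee.
Proof.
move=> hX hY hp hp' hg.
have h3 : X * p <= - X by rewrite -mulrN1; apply: ler_wpM2l.
have h4 : Y <= Y * p' by rewrite -{1}(mulr1 Y); apply: ler_wpM2l.
split; lra.
Qed.

Lemma ar_mixed X Y b ee p (p' : R) q (q' : R) :
  0 <= X -> 0 <= Y -> 0 <= b * ee ->
  1 <= p -> p + 1 <= p' -> q' <= -1 -> q + 1 <= q' ->
  0 <= X * p - Y * p' + b * ee -> 0 <= X * q - Y * q' + b * ee ->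
  X <= b * ee /\ Y <= b * ee.
Proof.
move=> hX hY hbe hp hp' hq hq' hf hu.
have e1 : Y * (p + 1) <= Y * p' by apply: ler_wpM2l.
have e2 : X * q <= X * (q' - 1) by apply: ler_wpM2l => //; lra.
case: (lerP X Y) => hXY.
  have e4 : Y - X <= (Y - X) * p by rewrite -{1}(mulr1 (Y - X)); apply: ler_wpM2l; lra.
  have : Y <= b * ee.
    rewrite mulrDr mulr1 in e1; rewrite mulrBl in e4; lra.
  split; lra.
have e4 : X - Y <= (X - Y) * (- q') by rewrite -{1}(mulr1 (X - Y)); apply: ler_wpM2l; lra.
have : X <= b * ee.
  rewrite mulrBr mulr1 in e2; rewrite mulrBl !mulrN in e4; lra.
split; lra.
Qed.

Lemma ar_fr Y b ee g p (p' : R) :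
  0 <= Y -> 1 <= b -> 0 <= ee -> 0 < p -> p + 1 <= p' ->
  g <= 0 * p - Y * p' + b * ee -> g <= 2 * b * (b + 1) * ee.
Proof.
move=> hY hb he hp hp' hg.
have h3 : 0 <= Y * p' by apply: mulr_ge0 => //; lra.
have h5 : 0 <= b * b * ee by apply: mulr_ge0 => //; apply: mulr_ge0; lra.
have h4 : 0 <= b * ee by apply: mulr_ge0; lra.
have -> : 2 * b * (b + 1) * ee = 2 * (b * b * ee) + 2 * (b * ee) by ring.
lra.
Qed.

Lemma ar_un X b ee g p (p' : R) :
  0 <= X -> 1 <= b -> 0 <= ee -> p' < 0 -> p + 1 <= p' ->
  g <= X * p - 0 * p' + b * ee -> g <= 2 * b * (b + 1) * ee.
Proof.
move=> hX hb he hp hp' hg.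
have h3 : X * p <= 0 by apply: mulr_ge0_le0 => //; lra.
have h5 : 0 <= b * b * ee by apply: mulr_ge0 => //; apply: mulr_ge0; lra.
have h4 : 0 <= b * ee by apply: mulr_ge0; lra.
have -> : 2 * b * (b + 1) * ee = 2 * (b * b * ee) + 2 * (b * ee) by ring.
lra.
Qed.

Lemma ar_termL (a E b dw p : R) :
  - E <= a -> - b <= dw <= b -> dw <= p -> 0 <= E ->
  a * dw <= (if 0 <= a then a else 0) * p + b * E.
Proof.
move=> hal /andP[hb1 hb2] hd hE; case: ifP => ha; first nra.
move/negbT: ha; rewrite -ltNge => ha; nra.
Qed.

Lemma ar_termH (a E b dw p : R) :
  a <= E -> - b <= dw <= b -> p <= dw -> 0 <= E ->
  a * dw <= - (if a <= 0 then - a else 0) * p + b * E.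
Proof.
move=> hal /andP[hb1 hb2] hd hE; case: ifP => ha; first by rewrite opprK; nra.
move/negbT: ha; rewrite -ltNge => ha; nra.
Qed.

End Arith.

Unset Implicit Arguments. Set Strict Implicit.

Theorem lemma2 (R : archiRealFieldType) (W M N B : nat)
    (Pw : 'I_W -> R) (P : 'I_M -> 'I_W -> R) (mu : R)
    (v : 'I_N -> 'I_W -> bool -> nat) (alpha : 'I_W -> R)
    (e : nat -> R) (beta : 'I_N -> 'I_M -> R) :
  (* prior *)
  (forall w, 0 < Pw w) -> \sum_w Pw w = 1 ->
  (* signal distributions *)
  (forall m w, 0 <= P m w) -> (forall w, \sum_m P m w = 1) ->
  (* stochastic dominance: Pr[S >= m | w1] > Pr[S >= m | w2] for w1 > w2, m >= 2 *)
  (forall (w1 w2 : 'I_W), (w2 < w1)%N -> forall m : 'I_M, (1 <= m)%N ->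
      \sum_(m' : 'I_M | (m <= m')%N) P m' w2 < \sum_(m' : 'I_M | (m <= m')%N) P m' w1) ->
  0 < mu < 1 ->
  (0 < B)%N ->
  (* utilities *)
  (forall n w x, (v n w x <= B)%N) ->
  (forall n (w1 w2 : 'I_W), (w1 < w2)%N -> (v n w1 true < v n w2 true)%N) ->
  (forall n (w1 w2 : 'I_W), (w1 < w2)%N -> (v n w2 false < v n w1 false)%N) ->
  (forall n w, v n w true <> v n w false) ->
  (* alpha constants *)
  (forall w, (#|[set n | (v n w true < v n w false)%N]|)%:~R
               = Num.floor ((1 - alpha w) * N%:R) :> int) ->
  (forall w, alpha w <> mu) ->
  (forall w, (alpha w < mu) =
     ((N - #|[set n | (v n w true < v n w false)%N]|)%:R < mu * N%:R)) ->
  (forall w, (mu < alpha w) =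
     (mu * N%:R < (N - #|[set n | (v n w true < v n w false)%N]|)%:R)) ->
  (exists w, inL mu alpha w) -> (exists w, inH mu alpha w) ->
  (* N large enough *)
  #|[set n | friendly mu v alpha n]|%:R < mu * N%:R ->
  #|[set n | unfriendly mu v alpha n]|%:R < (1 - mu) * N%:R ->
  (* regular profile with high fidelity *)
  is_profile beta ->
  regular mu v alpha beta ->
  1 - e N <= fidelity Pw P mu alpha beta ->
  eps_strong_BNE Pw P mu v ((W * B * ((W - 1) * B + 1))%N%:R * e N) beta.
Proof.
move=> HPw HPw1 HP0 HP1 _ Hmu HB Hv HvT HvF Hneq _ Halne HL _ [l0 Hl0] [h0 Hh0]
  _ _ Hb Hreg Hfid.
move=> [D [b' [Hb' Hout Hweak [n0 Hn0 Hstrict]]]].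
set ee := e N in Hfid Hstrict.
have Hs1 : forall (b : 'I_N -> 'I_M -> R) w,
    lam P mu false b w = 1 - lam P mu true b w.
  by move=> b w; rewrite -(@lam_sum1 _ _ _ _ P mu b w (HP1 w)) addrAC subrr add0r.
have HinH : forall w, inH mu alpha w = ~~ inL mu alpha w.
  move=> w; rewrite /inH /inL; move: (Halne w).
  by case: (ltgtP (alpha w) mu).
pose d n w : R := (v n w true)%:R - (v n w false)%:R.
pose a w := Pw w * (lam P mu true b' w - lam P mu true beta w).
pose E w := Pw w * (if inL mu alpha w then lam P mu true beta w
                    else lam P mu false beta w).
have HG : forall n, utility Pw P mu v b' n - utility Pw P mu v beta n
                    = \sum_w a w * d n w.
  move=> n; rewrite /utility -sumrB; apply: eq_bigr => w _.
  rewrite /a /d !Hs1; ring.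
have HE0 : forall w, 0 <= E w.
  move=> w; apply: mulr_ge0; first exact: ltW.
  by case: ifP => _; apply: (@lam_ge0 _ _ _ _ P mu).
have HEsum : \sum_w E w + fidelity Pw P mu alpha beta = 1.
  rewrite /fidelity (eq_bigl (fun w => ~~ inL mu alpha w) _ HinH).
  rewrite (bigID (inL mu alpha)) /= addrACA -!big_split /= -HPw1.
  rewrite [RHS](bigID (inL mu alpha)) /=; congr (_ + _); apply: eq_bigr => w Hw.
    by rewrite /E Hw -mulrDr Hs1 addrC subrK mulr1.
  by rewrite /E (negbTE Hw) -mulrDr Hs1 subrK mulr1.
have HEe : \sum_w E w <= ee by lra.
have He0 : 0 <= ee.
  by apply: le_trans HEe; apply: sumr_ge0 => w _.
have HaL : forall w, inL mu alpha w -> - E w <= a w.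
  move=> w Hw; rewrite /a /E Hw mulrBr.
  have : 0 <= Pw w * lam P mu true b' w.
    by apply: mulr_ge0; [exact: ltW | apply: (@lam_ge0 _ _ _ _ P mu)].
  lra.
have HaH : forall w, ~~ inL mu alpha w -> a w <= E w.
  move=> w Hw; rewrite /a /E (negbTE Hw) Hs1.
  apply: ler_wpM2l; first exact: ltW.
  have : 0 <= lam P mu false b' w by apply: (@lam_ge0 _ _ _ _ P mu).
  rewrite Hs1; lra.
pose Rs w := [set n | (v n w true < v n w false)%N].
have Hord : forall l h : 'I_W, inL mu alpha l -> ~~ inL mu alpha h -> (l < h)%N.
  move=> l h Hl Hh; rewrite ltnNge; apply/negP => Hhl.
  have Hsub : Rs l \subset Rs h.
    apply/subsetP => n; rewrite !inE => Hn.
    move: Hhl; rewrite leq_eqVlt => /orP[/eqP Heq|Hlt].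
      by have -> : h = l by apply: val_inj.
    by apply: ltn_trans (HvT n h l Hlt) (ltn_trans Hn (HvF n h l Hlt)).
  have Hc := subset_leq_card Hsub.
  move: Hl Hh; rewrite /inL !HL -/(Rs l) -/(Rs h) => Hl.
  apply/negP; rewrite negbK; apply: le_lt_trans Hl; rewrite ler_nat.
  by apply: leq_sub2l.
have [ls Hls HlsM] : exists2 ls, inL mu alpha ls &
    forall l, inL mu alpha l -> (l <= ls)%N.
  by case: (arg_maxnP (fun i : 'I_W => val i) Hl0) => i Hi Hm; exists i.
have Hh0' : ~~ inL mu alpha h0 by rewrite -HinH.
have [hs Hhs HhsM] : exists2 hs, ~~ inL mu alpha hs &
    forall h, ~~ inL mu alpha h -> (hs <= h)%N.
  by case: (@arg_minnP _ h0 (fun i => ~~ inL mu alpha i) (fun i : 'I_W => val i) Hh0') => i Hi Hm; exists i.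
have Hlshs : (ls < hs)%N by apply: Hord.
have Hdlt : forall n (w1 w2 : 'I_W), (w1 < w2)%N -> d n w1 + 1 <= d n w2.
  move=> n w1 w2 H12; rewrite /d.
  have h1 : ((v n w1 true)%:R + 1 <= (v n w2 true)%:R :> R).
    by rewrite natr1 ler_nat; apply: HvT.
  have h2 : ((v n w2 false)%:R + 1 <= (v n w1 false)%:R :> R).
    by rewrite natr1 ler_nat; apply: HvF.
  lra.
have Hdle : forall n (w1 w2 : 'I_W), (w1 <= w2)%N -> d n w1 <= d n w2.
  move=> n w1 w2; rewrite leq_eqVlt => /orP[/eqP Heq|Hlt].
    by have -> : w1 = w2 by apply: val_inj.
  by have := Hdlt n w1 w2 Hlt; lra.
pose b := (B%:R : R).
have HdB : forall n w, - b <= d n w <= b.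
  move=> n w; rewrite /d /b.
  have h1 : ((v n w true)%:R <= B%:R :> R) by rewrite ler_nat.
  have h2 : ((v n w false)%:R <= B%:R :> R) by rewrite ler_nat.
  have h3 : (0 <= (v n w true)%:R :> R) by [].
  have h4 : (0 <= (v n w false)%:R :> R) by [].
  apply/andP; split; lra.
have Hd0 : forall n w, d n w <= -1 \/ 1 <= d n w.
  move=> n w; rewrite /d; have := Hneq n w.
  case: (ltngtP (v n w true) (v n w false)) => // h _.
    left; have : ((v n w true)%:R + 1 <= (v n w false)%:R :> R).
      by rewrite natr1 ler_nat.
    lra.
  right; have : ((v n w false)%:R + 1 <= (v n w true)%:R :> R).
    by rewrite natr1 ler_nat.
  lra.
pose X := \sum_(w | inL mu alpha w) (if 0 <= a w then a w else 0).
pose Y := \sum_(w | ~~ inL mu alpha w) (if a w <= 0 then - a w else 0).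
have HX0 : 0 <= X.
  by apply: sumr_ge0 => w _; case: ifP.
have HY0 : 0 <= Y.
  by apply: sumr_ge0 => w _; case: ifP => // h; rewrite oppr_ge0.
have Hb0 : 0 <= b by rewrite /b.
have Hb1 : 1 <= b by rewrite /b ler1n.
have HGb : forall n, utility Pw P mu v b' n - utility Pw P mu v beta n
   <= X * d n ls - Y * d n hs + b * ee.
  move=> n; rewrite HG (bigID (inL mu alpha)) /=.
  have H1 : \sum_(w | inL mu alpha w) a w * d n w <=
            \sum_(w | inL mu alpha w) ((if 0 <= a w then a w else 0) * d n ls
                                        + b * E w).
    apply: ler_sum => w Hw.
    have hd : d n w <= d n ls by apply: Hdle; apply: HlsM.
    exact: ar_termL (HaL w Hw) (HdB n w) hd (HE0 w).
  have H2 : \sum_(w | ~~ inL mu alpha w) a w * d n w <=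
            \sum_(w | ~~ inL mu alpha w) (- (if a w <= 0 then - a w else 0) * d n hs
                                        + b * E w).
    apply: ler_sum => w Hw.
    have hd : d n hs <= d n w by apply: Hdle; apply: HhsM.
    exact: ar_termH (HaH w Hw) (HdB n w) hd (HE0 w).
  move: H1 H2; rewrite !big_split /= -!mulr_suml -!mulr_sumr sumrN -/X -/Y.
  have HE : b * \sum_w E w <= b * ee by apply: ler_wpM2l.
  move: HE; rewrite (bigID (inL mu alpha)) /= mulrDr.
  lra.
have HXz : (forall w, a w <= 0) -> X = 0.
  move=> Ha0; apply: big1 => w _; case: ifP => // h.
  by apply: le_anti; rewrite h Ha0.
have HYz : (forall w, 0 <= a w) -> Y = 0.
  move=> Ha0; apply: big1 => w _; case: ifP => // h.
  by apply/eqP; rewrite oppr_eq0; apply/eqP; apply: le_anti; rewrite h Ha0.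
have Ham1 : (forall n m, b' n m <= beta n m) -> forall w, a w <= 0.
  move=> Hle w; rewrite /a; apply: mulr_ge0_le0; first exact: ltW.
  by rewrite subr_le0; apply: (@lam_mono _ _ _ _ P mu).
have Ham2 : (forall n m, beta n m <= b' n m) -> forall w, 0 <= a w.
  move=> Hle w; rewrite /a; apply: mulr_ge0; first exact: ltW.
  by rewrite subr_ge0; apply: (@lam_mono _ _ _ _ P mu).
have HdF : forall n w, 0 < d n w -> (v n w false < v n w true)%N.
  by move=> n w; rewrite /d subr_gt0 ltr_nat.
have HdU : forall n w, d n w < 0 -> (v n w true < v n w false)%N.
  by move=> n w; rewrite /d subr_lt0 ltr_nat.
have HW : (2 <= W)%N.
  have h1 : (0 < hs)%N by apply: leq_ltn_trans (leq0n ls) Hlshs.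
  exact: leq_ltn_trans h1 (ltn_ord hs).
have HK : 2 * b * (b + 1) * ee <= (W * B * ((W - 1) * B + 1))%N%:R * ee.
  apply: ler_wpM2r => //.
  have -> : 2 * b * (b + 1) = (2 * B * (B + 1))%N%:R by rewrite /b natrM natrM natrD.
  rewrite ler_nat.
  have h1 : (2 * B <= W * B)%N by rewrite leq_mul2r HW orbT.
  have h2 : (B + 1 <= (W - 1) * B + 1)%N.
    by rewrite leq_add2r -{1}(mul1n B) leq_mul2r subn_gt0 HW orbT.
  by apply: leq_mul.
have Hweak' : forall n, n \in D -> 0 <= X * d n ls - Y * d n hs + b * ee.
  move=> n Hn; apply: le_trans (HGb n); rewrite subr_ge0; exact: Hweak.
have Hn0b := HGb n0.
have Hlshs1 := fun n => Hdlt n ls hs Hlshs.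
have Hbe : 0 <= b * ee by apply: mulr_ge0.
move: Hstrict.
set G0 := utility Pw P mu v b' n0.
set G1 := utility Pw P mu v beta n0.
move=> Hstrict.
suff Hfin : G0 - G1 <= 2 * b * (b + 1) * ee.
  by move: HK Hfin Hstrict; clear; lra.
clearbody X Y d a E b.
clear HG HEsum HE0 HaL HaH Hfid HEe HGb Hdle HL Hweak Hstrict HK.
have Hgen : X <= b * ee -> Y <= b * ee -> G0 - G1 <= 2 * b * (b + 1) * ee.
  by move=> hX hY; apply: ar_gen HX0 HY0 Hb1 He0 hX hY (HdB n0 ls) (HdB n0 hs) Hn0b.
case: (boolP [exists c in D, ~~ (0 < d c ls) && ~~ (d c hs < 0)]).
  move=> /exists_inP [c Hc /andP[h1 h2]].
  rewrite -leNgt in h1; rewrite -leNgt in h2.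
  have hc1 : d c ls <= -1 by case: (Hd0 c ls) => // h; move: h1 h; clear; lra.
  have hc2 : 1 <= d c hs by case: (Hd0 c hs) => // h; move: h2 h; clear; lra.
  have [hX hY] := ar_cont HX0 HY0 hc1 hc2 (Hweak' c Hc).
  exact: Hgen.
move=> Hnc.
have Hmixed : forall f u, f \in D -> u \in D -> 0 < d f ls -> d u hs < 0 ->
    G0 - G1 <= 2 * b * (b + 1) * ee.
  move=> f u Hf Hu hf hu.
  have hp : 1 <= d f ls by case: (Hd0 f ls) => // h; move: h hf; clear; lra.
  have hq : d u hs <= -1 by case: (Hd0 u hs) => // h; move: h hu; clear; lra.
  have [hX hY] := ar_mixed HX0 HY0 Hbe hp (Hlshs1 f) hq (Hlshs1 u)
                    (Hweak' f Hf) (Hweak' u Hu).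
  exact: Hgen.
case: (boolP [exists f in D, 0 < d f ls]) => [/exists_inP [f Hf hf]|Hnf];
  case: (boolP [exists u in D, d u hs < 0]) => [/exists_inP [u Hu hu]|Hnu].
- exact: Hmixed hf hu.
-
  have HDf : forall n, n \in D -> 0 < d n ls.
    move=> n Hn; move/exists_inPn: Hnu => /(_ n Hn) h.
    by move/exists_inPn: Hnc => /(_ n Hn); rewrite h andbT negbK.
  have Hle : forall n m, b' n m <= beta n m.
    move=> n m; case: (boolP (n \in D)) => Hn; last by rewrite Hout.
    have Hfr : friendly mu v alpha n.
      by apply/existsP; exists ls; rewrite Hls /=; apply: HdF; apply: HDf.
    rewrite (Hreg.1 n m Hfr); by have /andP[] := Hb' n m.
  have HX := HXz (Ham1 Hle).
  rewrite HX in Hn0b.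
  exact: ar_fr HY0 Hb1 He0 (HDf n0 Hn0) (Hlshs1 n0) Hn0b.
-
  have HDu : forall n, n \in D -> d n hs < 0.
    move=> n Hn; move/exists_inPn: Hnf => /(_ n Hn) h.
    by move/exists_inPn: Hnc => /(_ n Hn); rewrite h /= negbK.
  have Hle : forall n m, beta n m <= b' n m.
    move=> n m; case: (boolP (n \in D)) => Hn; last by rewrite Hout.
    have Hun : unfriendly mu v alpha n.
      by apply/existsP; exists hs; rewrite HinH Hhs /=; apply: HdU; apply: HDu.
    rewrite (Hreg.2 n m Hun); by have /andP[] := Hb' n m.
  have HY := HYz (Ham2 Hle).
  rewrite HY in Hn0b.
  exact: ar_un HX0 Hb1 He0 (HDu n0 Hn0) (Hlshs1 n0) Hn0b.
- move/exists_inPn: Hnc => /(_ n0 Hn0).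
  move/exists_inPn: Hnf => /(_ n0 Hn0) ->.
  by move/exists_inPn: Hnu => /(_ n0 Hn0) ->.
Qed.
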